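(* Let $B\subseteq\mathcal{SC}\times\mathcal{SC}$ satisfy $B\subseteq\mathcal S(B,B)$, and let $\mathcal T=\{(\mathcal M^{-1}(\sigma_1),\mathcal M^{-1}(\sigma_2)) : \sigma_1B\sigma_2\}$. Then $\mathcal T\subseteq F_{\leq}(\mathcal T)$, i.e. $\mathcal T$ is a type simulation.
   Context: Fix base types $BT$ with preorder $\leq_{\mathsf b}$ and labels $\mathcal L$. Session type terms: $T::=\mathsf{end}\mid ?[M]T\mid ![M]T\mid \&\langle l_1{:}T_1,\dots,l_n{:}T_n\rangle\mid \oplus\langle l_1{:}T_1,\dots,l_n{:}T_n\rangle\mid \mu X.T\mid X$, $M::=T\mid\mathtt t$. Contract terms: $\sigma::=\mathbf 1\mid ?\mathtt t.\sigma\mid !\mathtt t.\sigma\mid !(\sigma).\sigma\mid ?(\sigma).\sigma\mid \sum_{i\in I}?l_i.\sigma_i\mid \bigoplus_{i\in I}!l_i.\sigma_i\mid \mu x.\sigma\mid x$. $\mathcal{ST}$, $\mathcal{SC}$ are the closed guarded terms. $\mathcal M$ is the homomorphic bijection from type terms to contract terms ($\mathsf{end}\mapsto\mathbf 1$, $![\mathtt t]S\mapsto!\mathtt t.\mathcal M(S)$, $?[\mathtt t]S\mapsto?\mathtt t.\mathcal M(S)$, $![T]S\mapsto!(\mathcal M(T)).\mathcal M(S)$, $?[T]S\mapsto?(\mathcal M(T)).\mathcal M(S)$, branch $\&\langle l_i{:}S_i\rangle\mapsto\sum_i?l_i.\mathcal M(S_i)$, choice $\oplus\langle l_i{:}S_i\rangle\mapsto\bigoplus_i!l_i.\mathcal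 M(S_i)$, $\mu X.S\mapsto\mu x.\mathcal M(S)$, $X\mapsto x$), with inverse $\mathcal M^{-1}$. For both languages $\mathrm{unfold}(\mu x.\sigma')=\mathrm{unfold}(\sigma'[\mu x.\sigma'/x])$, otherwise identity. $\mathcal S(R,B)$: set of contract pairs $(\sigma_1,\sigma_2)$ such that, depending on $\mathrm{unfold}(\sigma_1)$: $\mathbf 1$ forces $\mathrm{unfold}(\sigma_2)=\mathbf 1$; $?\mathtt t_1.\sigma_1'$ forces $?\mathtt t_2.\sigma_2'$ with $\sigma_1'R\sigma_2'$, $\mathtt t_1\leq_{\mathsf b}\mathtt t_2$; $!\mathtt t_1.\sigma_1'$ forces $!\mathtt t_2.\sigma_2'$ with $\sigma_1'R\sigma_2'$, $\mathtt t_2\leq_{\mathsf b}\mathtt t_1$; $!(\sigma^m_1).\sigma_1'$ forces $!(\sigma^m_2).\sigma_2'$ with $\sigma_1'R\sigma_2'$, $\sigma^m_2B\sigma^m_1$; $?(\sigma^m_1).\sigma_1'$ forces $?(\sigma^m_2).\sigma_2'$ with $\sigma_1'R\sigma_2'$, $\sigma^m_1B\sigma^m_2$; $\sum_{i\in I}?l_i.\sigma^1_i$ forces $\sum_{j\in J}?l_j.\sigma^2_j$ with $I\subseteq J$, $\sigma^1_iR\sigma^2_i$; $\bigoplus_{i\in I}!l_i.\sigma^1_i$ forces $\bigoplus_{j\in J}!l_j.\sigma^2_j$ with $J\subseteq I$, $\sigma^1_jR\sigma^2_j$ (forced forms are those of $\mathrm{unfold}(\sigma_2)$). $F_{\leq}(R)$,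 for $R\subseteq\mathcal{ST}^2$: pairs $(T,S)$ such that: $\mathrm{unfold}(T)=\mathsf{end}$ forces $\mathrm{unfold}(S)=\mathsf{end}$; $?[\mathtt t_1]S_1$ forces $\mathrm{unfold}(S)=?[\mathtt t_2]S_2$ with $S_1RS_2$, $\mathtt t_1\leq_{\mathsf b}\mathtt t_2$; $![\mathtt t_1]S_1$ forces $![\mathtt t_2]S_2$ with $S_1RS_2$, $\mathtt t_2\leq_{\mathsf b}\mathtt t_1$; $![T_1]S_1$ forces $![T_2]S_2$ with $S_1RS_2$, $T_2RT_1$; $?[T_1]S_1$ forces $?[T_2]S_2$ with $S_1RS_2$, $T_1RT_2$; $\&\langle l_1{:}T_1..l_m{:}T_m\rangle$ forces $\&\langle l_1{:}S_1..l_n{:}S_n\rangle$ with $m\le n$, $T_iRS_i$; $\oplus\langle l_1{:}T_1..l_m{:}T_m\rangle$ forces $\oplus\langle l_1{:}S_1..l_n{:}S_n\rangle$ with $n\le m$, $T_iRS_i$. A type simulation is $R$ with $R\subseteq F_\leq(R)$. *)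

(* Defs.v *)
From Stdlib Require Import List Arith.
Import ListNotations.
Set Implicit Arguments.

Section Syntax.
Variables (BT L : Type).

(* Session type terms  T ::= end | ?[M]T | ![M]T | &<l:T..> | (+)<l:T..> | mu X.T | X
   with M ::= T | t ; the two payload kinds are separate constructors.
   Variables are de Bruijn indices. *)
Inductive stype : Type :=
| st_end : stype
| st_inb : BT -> stype -> stype
| st_outb : BT -> stype -> stype
| st_ins : stype -> stype -> stype
| st_outs : stype -> stype -> stype
| st_branch : list (L * stype) -> stype
| st_choice : list (L * stype) -> stype
| st_mu : stype -> stype
| st_var : nat -> stype.

(* Contract terms; sums over I = {1..n} are represented by lists. *)
Inductive contract : Type :=
| c_one : contract
| c_inb : BT -> contract -> contract
| c_outb : BT -> contract -> contract
| c_ins : contract -> contract -> contract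
| c_outs : contract -> contract -> contract
| c_ext : list (L * contract) -> contract
| c_int : list (L * contract) -> contract
| c_mu : contract -> contract
| c_var : nat -> contract.

Fixpoint st_lift (c : nat) (t : stype) : stype :=
  match t with
  | st_end => st_end
  | st_inb b k => st_inb b (st_lift c k)
  | st_outb b k => st_outb b (st_lift c k)
  | st_ins m k => st_ins (st_lift c m) (st_lift c k)
  | st_outs m k => st_outs (st_lift c m) (st_lift c k)
  | st_branch bs => st_branch (map (fun p => (fst p, st_lift c (snd p))) bs)
  | st_choice bs => st_choice (map (fun p => (fst p, st_lift c (snd p))) bs)
  | st_mu b => st_mu (st_lift (S c) b)
  | st_var n => if n <? c then st_var n else st_var (S n)
  end.

Fixpoint st_subst (k : nat) (u : stype) (t : stype) : stype :=
  match t with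
  | st_end => st_end
  | st_inb b s => st_inb b (st_subst k u s)
  | st_outb b s => st_outb b (st_subst k u s)
  | st_ins m s => st_ins (st_subst k u m) (st_subst k u s)
  | st_outs m s => st_outs (st_subst k u m) (st_subst k u s)
  | st_branch bs => st_branch (map (fun p => (fst p, st_subst k u (snd p))) bs)
  | st_choice bs => st_choice (map (fun p => (fst p, st_subst k u (snd p))) bs)
  | st_mu b => st_mu (st_subst (S k) (st_lift 0 u) b)
  | st_var n => if n <? k then st_var n else if n =? k then u else st_var (pred n)
  end.

Fixpoint st_closed_at (n : nat) (t : stype) : bool :=
  match t with
  | st_end => true
  | st_inb _ k | st_outb _ k => st_closed_at n k
  | st_ins m k | st_outs m k => st_closed_at n m && st_closed_at n k
  | st_branch bs | st_choice bs => forallb (fun p => st_closed_at n (snd p)) bs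
  | st_mu b => st_closed_at (S n) b
  | st_var m => m <? n
  end.

(* body of a chain of n mu's does not reduce to a variable bound by that chain *)
Fixpoint st_contr (n : nat) (t : stype) : bool :=
  match t with
  | st_mu b => st_contr (S n) b
  | st_var m => n <=? m
  | _ => true
  end.

Fixpoint st_guarded (t : stype) : bool :=
  match t with
  | st_end => true
  | st_inb _ k | st_outb _ k => st_guarded k
  | st_ins m k | st_outs m k => st_guarded m && st_guarded k
  | st_branch bs | st_choice bs => forallb (fun p => st_guarded (snd p)) bs
  | st_mu b => st_contr 1 b && st_guarded b
  | st_var _ => true
  end.

Definition inST (t : stype) : Prop := st_closed_at 0 t = true /\ st_guarded t = true.

Inductive st_unfold : stype -> stype -> Prop :=
| stu_mu : forall b u, st_unfold (st_subst 0 (st_mu b) b) u -> st_unfold (st_mu b) u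
| stu_other : forall t, (forall b, t <> st_mu b) -> st_unfold t t.

Fixpoint c_lift (c : nat) (t : contract) : contract :=
  match t with
  | c_one => c_one
  | c_inb b k => c_inb b (c_lift c k)
  | c_outb b k => c_outb b (c_lift c k)
  | c_ins m k => c_ins (c_lift c m) (c_lift c k)
  | c_outs m k => c_outs (c_lift c m) (c_lift c k)
  | c_ext bs => c_ext (map (fun p => (fst p, c_lift c (snd p))) bs)
  | c_int bs => c_int (map (fun p => (fst p, c_lift c (snd p))) bs)
  | c_mu b => c_mu (c_lift (S c) b)
  | c_var n => if n <? c then c_var n else c_var (S n)
  end.

Fixpoint c_subst (k : nat) (u : contract) (t : contract) : contract :=
  match t with
  | c_one => c_one
  | c_inb b s => c_inb b (c_subst k u s)
  | c_outb b s => c_outb b (c_subst k u s)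
  | c_ins m s => c_ins (c_subst k u m) (c_subst k u s)
  | c_outs m s => c_outs (c_subst k u m) (c_subst k u s)
  | c_ext bs => c_ext (map (fun p => (fst p, c_subst k u (snd p))) bs)
  | c_int bs => c_int (map (fun p => (fst p, c_subst k u (snd p))) bs)
  | c_mu b => c_mu (c_subst (S k) (c_lift 0 u) b)
  | c_var n => if n <? k then c_var n else if n =? k then u else c_var (pred n)
  end.

Fixpoint c_closed_at (n : nat) (t : contract) : bool :=
  match t with
  | c_one => true
  | c_inb _ k | c_outb _ k => c_closed_at n k
  | c_ins m k | c_outs m k => c_closed_at n m && c_closed_at n k
  | c_ext bs | c_int bs => forallb (fun p => c_closed_at n (snd p)) bs
  | c_mu b => c_closed_at (S n) b
  | c_var m => m <? n
  end.

Fixpoint c_contr (n : nat) (t : contract) : bool :=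
  match t with
  | c_mu b => c_contr (S n) b
  | c_var m => n <=? m
  | _ => true
  end.

Fixpoint c_guarded (t : contract) : bool :=
  match t with
  | c_one => true
  | c_inb _ k | c_outb _ k => c_guarded k
  | c_ins m k | c_outs m k => c_guarded m && c_guarded k
  | c_ext bs | c_int bs => forallb (fun p => c_guarded (snd p)) bs
  | c_mu b => c_contr 1 b && c_guarded b
  | c_var _ => true
  end.

Definition inSC (t : contract) : Prop := c_closed_at 0 t = true /\ c_guarded t = true.

Inductive c_unfold : contract -> contract -> Prop :=
| cu_mu : forall b u, c_unfold (c_subst 0 (c_mu b) b) u -> c_unfold (c_mu b) u
| cu_other : forall t, (forall b, t <> c_mu b) -> c_unfold t t.

Fixpoint Mmap (t : stype) : contract :=
  match t with
  | st_end => c_one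
  | st_inb b k => c_inb b (Mmap k)
  | st_outb b k => c_outb b (Mmap k)
  | st_ins m k => c_ins (Mmap m) (Mmap k)
  | st_outs m k => c_outs (Mmap m) (Mmap k)
  | st_branch bs => c_ext (map (fun p => (fst p, Mmap (snd p))) bs)
  | st_choice bs => c_int (map (fun p => (fst p, Mmap (snd p))) bs)
  | st_mu b => c_mu (Mmap b)
  | st_var n => c_var n
  end.

Fixpoint Minv (t : contract) : stype :=
  match t with
  | c_one => st_end
  | c_inb b k => st_inb b (Minv k)
  | c_outb b k => st_outb b (Minv k)
  | c_ins m k => st_ins (Minv m) (Minv k)
  | c_outs m k => st_outs (Minv m) (Minv k)
  | c_ext bs => st_branch (map (fun p => (fst p, Minv (snd p))) bs)
  | c_int bs => st_choice (map (fun p => (fst p, Minv (snd p))) bs)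
  | c_mu b => st_mu (Minv b)
  | c_var n => st_var n
  end.

Variable leb : BT -> BT -> Prop.

Definition Sfun (R B : contract -> contract -> Prop) (s1 s2 : contract) : Prop :=
  inSC s1 /\ inSC s2 /\
  forall u1, c_unfold s1 u1 ->
  match u1 with
  | c_one => c_unfold s2 c_one
  | c_inb t1 k1 => exists t2 k2, c_unfold s2 (c_inb t2 k2) /\ R k1 k2 /\ leb t1 t2
  | c_outb t1 k1 => exists t2 k2, c_unfold s2 (c_outb t2 k2) /\ R k1 k2 /\ leb t2 t1
  | c_outs m1 k1 => exists m2 k2, c_unfold s2 (c_outs m2 k2) /\ R k1 k2 /\ B m2 m1
  | c_ins m1 k1 => exists m2 k2, c_unfold s2 (c_ins m2 k2) /\ R k1 k2 /\ B m1 m2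
  | c_ext bs1 => exists bs2, c_unfold s2 (c_ext bs2) /\ length bs1 <= length bs2 /\
      forall i l k1, nth_error bs1 i = Some (l, k1) ->
        exists k2, nth_error bs2 i = Some (l, k2) /\ R k1 k2
  | c_int bs1 => exists bs2, c_unfold s2 (c_int bs2) /\ length bs2 <= length bs1 /\
      forall i l k2, nth_error bs2 i = Some (l, k2) ->
        exists k1, nth_error bs1 i = Some (l, k1) /\ R k1 k2
  | c_mu _ | c_var _ => False
  end.

Definition Fle (R : stype -> stype -> Prop) (T S : stype) : Prop :=
  inST T /\ inST S /\
  forall u1, st_unfold T u1 ->
  match u1 with
  | st_end => st_unfold S st_end
  | st_inb t1 k1 => exists t2 k2, st_unfold S (st_inb t2 k2) /\ R k1 k2 /\ leb t1 t2
  | st_outb t1 k1 => exists t2 k2, st_unfold S (st_outb t2 k2) /\ R k1 k2 /\ leb t2 t1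
  | st_outs m1 k1 => exists m2 k2, st_unfold S (st_outs m2 k2) /\ R k1 k2 /\ R m2 m1
  | st_ins m1 k1 => exists m2 k2, st_unfold S (st_ins m2 k2) /\ R k1 k2 /\ R m1 m2
  | st_branch bs1 => exists bs2, st_unfold S (st_branch bs2) /\ length bs1 <= length bs2 /\
      forall i l k1, nth_error bs1 i = Some (l, k1) ->
        exists k2, nth_error bs2 i = Some (l, k2) /\ R k1 k2
  | st_choice bs1 => exists bs2, st_unfold S (st_choice bs2) /\ length bs2 <= length bs1 /\
      forall i l k2, nth_error bs2 i = Some (l, k2) ->
        exists k1, nth_error bs1 i = Some (l, k1) /\ R k1 k2
  | st_mu _ | st_var _ => False
  end.

Definition type_simulation (R : stype -> stype -> Prop) : Prop :=
  forall T S, R T S -> Fle R T S.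

Definition Minv_rel (B : contract -> contract -> Prop) (T S : stype) : Prop :=
  exists s1 s2, B s1 s2 /\ T = Minv s1 /\ S = Minv s2.

End Syntax.

(* Main.v *)
Require Import Defs.
From Stdlib Require Import List Arith.
Set Implicit Arguments.

Section Aux.
Variables BT L : Type.

Definition cind (P : contract BT L -> Prop)
  (H1 : P (c_one _ _))
  (H2 : forall b k, P k -> P (c_inb b k))
  (H3 : forall b k, P k -> P (c_outb b k))
  (H4 : forall m k, P m -> P k -> P (c_ins m k))
  (H5 : forall m k, P m -> P k -> P (c_outs m k))
  (H6 : forall bs, Forall (fun p => P (snd p)) bs -> P (c_ext bs))
  (H7 : forall bs, Forall (fun p => P (snd p)) bs -> P (c_int bs))
  (H8 : forall b, P b -> P (c_mu b))
  (H9 : forall n, P (c_var _ _ n)) : forall t, P t :=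
  fix F t := match t return P t with
  | c_one _ _ => H1
  | c_inb b k => H2 b k (F k)
  | c_outb b k => H3 b k (F k)
  | c_ins m k => H4 m k (F m) (F k)
  | c_outs m k => H5 m k (F m) (F k)
  | c_ext bs => H6 bs ((fix G (bs : list (L * contract BT L)) : Forall (fun p => P (snd p)) bs :=
        match bs with nil => Forall_nil _ | p :: r => Forall_cons p (F (snd p)) (G r) end) bs)
  | c_int bs => H7 bs ((fix G (bs : list (L * contract BT L)) : Forall (fun p => P (snd p)) bs :=
        match bs with nil => Forall_nil _ | p :: r => Forall_cons p (F (snd p)) (G r) end) bs)
  | c_mu b => H8 b (F b)
  | c_var _ _ n => H9 n
  end.

Lemma map_F {A C D : Type} (f : A -> C) (g : A -> D) (h : C -> D) (bs : list (L * A)) :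
  Forall (fun p => h (f (snd p)) = g (snd p)) bs ->
  map (fun p => (fst p, h (snd p))) (map (fun p => (fst p, f (snd p))) bs) =
  map (fun p => (fst p, g (snd p))) bs.
Proof. induction 1; simpl; auto. rewrite H, IHForall; auto. Qed.

Lemma forallb_F {A C : Type} (f : A -> C) (g : A -> bool) (h : C -> bool) (bs : list (L * A)) :
  Forall (fun p => h (f (snd p)) = g (snd p)) bs ->
  forallb (fun p => h (snd p)) (map (fun p => (fst p, f (snd p))) bs) =
  forallb (fun p => g (snd p)) bs.
Proof. induction 1; simpl; auto. rewrite H, IHForall; auto. Qed.

Lemma map_Fa {A C : Type} (f g : A -> C) (bs : list A) :
  Forall (fun p => f p = g p) bs -> map f bs = map g bs.
Proof. induction 1; simpl; auto. rewrite H, IHForall; auto. Qed.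

Lemma Minv_lift : forall (t : contract BT L) c, Minv (c_lift c t) = st_lift c (Minv t).
Proof.
  induction t using cind; intros; simpl; try congruence.
  - f_equal. rewrite !map_map. apply map_Fa. eapply Forall_impl; [|exact H]. simpl; intros; congruence.
  - f_equal. rewrite !map_map. apply map_Fa. eapply Forall_impl; [|exact H]. simpl; intros; congruence.
  - destruct (n <? c); auto.
Qed.

Lemma Minv_subst : forall (t : contract BT L) k u, Minv (c_subst k u t) = st_subst k (Minv u) (Minv t).
Proof.
  induction t using cind; intros; simpl; try congruence.
  - f_equal. rewrite !map_map. apply map_Fa. eapply Forall_impl; [|exact H]. simpl; intros; congruence.
  - f_equal. rewrite !map_map. apply map_Fa. eapply Forall_impl; [|exact H]. simpl; intros; congruence.
  - rewrite IHt, Minv_lift; auto.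
  - destruct (n <? k); auto. destruct (n =? k); auto.
Qed.

Lemma Minv_closed : forall (t : contract BT L) n, st_closed_at n (Minv t) = c_closed_at n t.
Proof.
  induction t using cind; intros; simpl; try congruence.
  - apply forallb_F. eapply Forall_impl; [|exact H]. simpl; intros; congruence.
  - apply forallb_F. eapply Forall_impl; [|exact H]. simpl; intros; congruence.
Qed.

Lemma Minv_contr : forall (t : contract BT L) n, st_contr n (Minv t) = c_contr n t.
Proof. induction t using cind; intros; simpl; auto. Qed.

Lemma Minv_guarded : forall (t : contract BT L), st_guarded (Minv t) = c_guarded t.
Proof.
  induction t using cind; intros; simpl; try congruence.
  - apply forallb_F. eapply Forall_impl; [|exact H]. simpl; intros; congruence.
  - apply forallb_F. eapply Forall_impl; [|exact H]. simpl; intros; congruence.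
  - rewrite Minv_contr; congruence.
Qed.

Lemma Minv_inST : forall (t : contract BT L), inSC t -> inST (Minv t).
Proof. unfold inSC, inST; intros t [H1 H2]. rewrite Minv_closed, Minv_guarded; auto. Qed.

Lemma Minv_unfold : forall (s u : contract BT L), c_unfold s u -> st_unfold (Minv s) (Minv u).
Proof.
  induction 1; simpl.
  - constructor. rewrite Minv_subst in IHc_unfold. exact IHc_unfold.
  - constructor. intros b E. destruct t; simpl in E; try discriminate.
    injection E; intros; subst. eapply H; eauto.
Qed.

Lemma unfold_Minv : forall (T v : stype BT L), st_unfold T v -> forall s, T = Minv s ->
  exists u, c_unfold s u /\ v = Minv u.
Proof.
  induction 1; intros s E.
  - destruct s; simpl in E; try discriminate. injection E; intros; subst.
    destruct (IHst_unfold (c_subst 0 (c_mu s) s)) as [u' [H1 H2]].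
    + rewrite Minv_subst; auto.
    + exists u'; split; auto. constructor; auto.
  - exists s; split; auto. constructor. intros b E'. subst. eapply H. simpl; eauto.
Qed.

Lemma nth_map_inv {A C : Type} (f : A -> C) (bs : list (L * A)) i l k :
  nth_error (map (fun p => (fst p, f (snd p))) bs) i = Some (l, k) ->
  exists k', nth_error bs i = Some (l, k') /\ k = f k'.
Proof.
  rewrite nth_error_map. destruct (nth_error bs i) as [[l' k']|]; simpl; intro E;
  try discriminate. injection E; intros; subst. eauto.
Qed.

Lemma nth_map {A C : Type} (f : A -> C) (bs : list (L * A)) i l k :
  nth_error bs i = Some (l, k) ->
  nth_error (map (fun p => (fst p, f (snd p))) bs) i = Some (l, f k).
Proof. rewrite nth_error_map. intros ->. reflexivity. Qed.

End Aux.

Theorem mainTheorem15 (BT L : Type) (leb : BT -> BT -> Prop)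
  (leb_refl : forall t, leb t t)
  (leb_trans : forall t1 t2 t3, leb t1 t2 -> leb t2 t3 -> leb t1 t3)
  (B : contract BT L -> contract BT L -> Prop)
  (B_SC : forall s1 s2, B s1 s2 -> inSC s1 /\ inSC s2)
  (B_post : forall s1 s2, B s1 s2 -> Sfun leb B B s1 s2) :
  type_simulation leb (Minv_rel B).
Proof.
  intros T S [s1 [s2 [HB [-> ->]]]].
  destruct (B_post _ _ HB) as [HS1 [HS2 Hu]].
  split; [apply Minv_inST; auto|]. split; [apply Minv_inST; auto|].
  intros u1 Hun. destruct (unfold_Minv Hun s1 eq_refl) as [u [Hu1 ->]].
  specialize (Hu u Hu1).
  destruct u; simpl in *; try contradiction.
  - apply (Minv_unfold Hu).
  - destruct Hu as [t2 [k2 [H1 [H2 H3]]]]. exists t2, (Minv k2).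
    split; [apply (Minv_unfold H1)|]. split; auto. exists u, k2; auto.
  - destruct Hu as [t2 [k2 [H1 [H2 H3]]]]. exists t2, (Minv k2).
    split; [apply (Minv_unfold H1)|]. split; auto. exists u, k2; auto.
  - destruct Hu as [m2 [k2 [H1 [H2 H3]]]]. exists (Minv m2), (Minv k2).
    split; [apply (Minv_unfold H1)|]. split; [exists u2, k2; auto|exists u1, m2; auto].
  - destruct Hu as [m2 [k2 [H1 [H2 H3]]]]. exists (Minv m2), (Minv k2).
    split; [apply (Minv_unfold H1)|]. split; [exists u2, k2; auto|exists m2, u1; auto].
  - destruct Hu as [bs2 [H1 [H2 H3]]].
    exists (map (fun p => (fst p, Minv (snd p))) bs2).
    split; [apply (Minv_unfold H1)|]. rewrite !length_map. split; auto.
    intros i lb k1 E. destruct (nth_map_inv _ _ _ E) as [k' [E' ->]].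
    destruct (H3 _ _ _ E') as [k2 [E2 HB2]]. exists (Minv k2).
    split; [apply nth_map; auto| exists k', k2; auto].
  - destruct Hu as [bs2 [H1 [H2 H3]]].
    exists (map (fun p => (fst p, Minv (snd p))) bs2).
    split; [apply (Minv_unfold H1)|]. rewrite !length_map. split; auto.
    intros i lb k2 E. destruct (nth_map_inv _ _ _ E) as [k' [E' ->]].
    destruct (H3 _ _ _ E') as [k1 [E1 HB1]]. exists (Minv k1).
    split; [apply nth_map; auto| exists k1, k'; auto].
Qed.
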